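(* In the curved-exam game described in the context, for every student $i$, every $x_i\in(\alpha_i,1]$ and every opponent profile $x_{-i}\in[0,1]^{n-1}$, we have $U_i(\alpha_i,x_{-i})>U_i(x_i,x_{-i})$; that is, every strategy in $(\alpha_i,1]$ is strictly dominated by $\alpha_i$.
   Context: The curved-exam game: fix $n\ge2$, abilities $\alpha_1,\dots,\alpha_n\in(0,1)$, target mean $m\in(0,1)$. Student $i$ chooses $x_i\in[0,1]$; $\bar x=\frac1n\sum_j x_j$, $\bar x_{-i}=\frac1{n-1}\sum_{j\ne i}x_j$. Grade $G_i(x)=x_i+\max(m-\bar x,0)=\max\big(m+\frac{n-1}{n}(x_i-\bar x_{-i}),x_i\big)$ (not truncated at 1); payoff $U_i(x)=G_i(x)^{\alpha_i}(1-x_i)^{1-\alpha_i}$. *)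

(* Defs.v *)
From mathcomp Require Import all_boot all_order all_algebra.
From mathcomp Require Import all_classical all_reals all_analysis.
Set Implicit Arguments. Unset Strict Implicit. Unset Printing Implicit Defensive.
Import Order.TTheory GRing.Theory Num.Theory.
Local Open Scope ring_scope.

Section Game.
Variables (R : realType) (n : nat).

Definition xbar (x : 'I_n -> R) : R := (\sum_(j < n) x j) / n%:R.

(* grade G_i(x) = x_i + max(m - xbar, 0)  (not truncated at 1) *)
Definition grade (m : R) (x : 'I_n -> R) (i : 'I_n) : R :=
  x i + Num.max (m - xbar x) 0.

(* payoff U_i(x) = G_i(x)^alpha_i (1 - x_i)^(1 - alpha_i), powR has 0 `^ a = 0 for a != 0 *)
Definition payoff (alpha : 'I_n -> R) (m : R) (x : 'I_n -> R) (i : 'I_n) : R :=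
  powR (grade m x i) (alpha i) * powR (1 - x i) (1 - alpha i).

Definition deviate (x : 'I_n -> R) (i : 'I_n) (y : R) : 'I_n -> R :=
  fun j => if j == i then y else x j.
End Game.

(* Main.v *)
Require Import Defs.
From mathcomp Require Import all_boot all_order all_algebra.
From mathcomp Require Import all_classical all_reals all_analysis.
From mathcomp Require Import lra.
Import Order.TTheory GRing.Theory Num.Theory.
Local Open Scope ring_scope.

Lemma ln_le_sub (R : realType) (p q : R) : 0 < p -> 0 < q ->
  ln p - ln q <= p / q - 1.
Proof.
move=> p0 q0; rewrite lerBrDl.
have := expR_ge1Dx (ln p - ln q).
by rewrite expRD expRN !lnK ?posrE.
Qed.

Lemma ln_lt_sub (R : realType) (p q : R) : 0 < p -> 0 < q -> p != q ->
  ln p - ln q < p / q - 1.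
Proof.
move=> p0 q0 pq; rewrite ltrBrDl.
have := @expR_gt1Dx R (ln p - ln q).
rewrite expRD expRN !lnK ?posrE //; apply.
rewrite subr_eq0; apply/negP => /eqP h.
by move/eqP: pq; apply; apply: ln_inj; rewrite ?posrE.
Qed.

Theorem mainTheorem5 (R : realType) (n : nat) (alpha : 'I_n -> R) (m : R)
  (hn : (2 <= n)%N)
  (halpha : forall j, 0 < alpha j < 1)
  (hm : 0 < m < 1)
  (x : 'I_n -> R) (hx : forall j, 0 <= x j <= 1)
  (i : 'I_n) (y : R) (hy : alpha i < y <= 1) :
  payoff alpha m (deviate x i y) i < payoff alpha m (deviate x i (alpha i)) i.
Proof.
set a := alpha i.
have /andP[a0 a1] := halpha i.
have /andP[ay y1] := hy.
rewrite /payoff /grade /deviate !eqxx.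
set dy := Num.max (m - xbar _) 0.
set da := Num.max (m - xbar _) 0.
have hxb : xbar (deviate x i a) <= xbar (deviate x i y).
  rewrite /xbar ler_wpM2r ?invr_ge0 ?ler0n //.
  by apply: ler_sum => j _; rewrite /deviate; case: (j == i) => //; exact: ltW.
have dyda : dy <= da.
  rewrite /dy /da /deviate ge_max; apply/andP; split; rewrite le_max; last by rewrite lexx orbT.
  by rewrite lerB // lexx.
have da0 : 0 <= da by rewrite /da le_max lexx orbT.
have dy0 : 0 <= dy by rewrite /dy le_max lexx orbT.
have A0 : 0 < a + da by rewrite ltr_wpDr.
have B0 : 0 < 1 - a by rewrite subr_gt0.
have P0 : 0 < y + dy by rewrite ltr_wpDr // (lt_trans a0).
have key : a * (y + dy) <= y * (a + da).
  rewrite mulrDr mulrDr mulrC lerD2l.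
  apply: (le_trans (y := a * da)); first by rewrite ler_wpM2l // ltW.
  by rewrite ler_wpM2r // ltW.
move: y1; rewrite le_eqVlt => /orP[/eqP y1e|y1l].
  rewrite y1e subrr powR0 ?mulr0; last by rewrite subr_eq0 eq_sym lt_eqF.
  by rewrite mulr_gt0 // powR_gt0.
have Q0 : 0 < 1 - y by rewrite subr_gt0.
rewrite /powR !gt_eqF // -!expRD ltr_expR.
have h1 := @ln_le_sub _ _ _ P0 A0.
have yaneq : 1 - y != 1 - a by rewrite lt_eqF // ltrD2l ltrN2.
have h2 := @ln_lt_sub _ _ _ Q0 B0 yaneq.
have e1 : a * (ln (y + dy) - ln (a + da)) <= a * ((y + dy) / (a + da) - 1).
  by rewrite ler_wpM2l // ltW.
have e2 : (1 - a) * (ln (1 - y) - ln (1 - a)) < (1 - a) * ((1 - y) / (1 - a) - 1).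
  by rewrite ltr_pM2l.
have e3 : (1 - a) * ((1 - y) / (1 - a)) = 1 - y by rewrite mulrC divfK // gt_eqF.
have e4 : a * ((y + dy) / (a + da)) <= y.
  by rewrite mulrA ler_pdivrMr.
move: e1 e2 e3 e4.
set lP := ln (y + dy); set lA := ln (a + da); set lQ := ln (1 - y); set lB := ln (1 - a).
set u := (y + dy) / (a + da); set v := (1 - y) / (1 - a).
move=> e1 e2 e3 e4.
rewrite -/a; rewrite !mulrBr !mulr1 in e1 e2; lra.
Qed.
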